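(* For $\gamma>0$ and an integer $d\geq1$, let $BD(\gamma,d)$ be the birth-and-death process on $\{0,1,2,\ldots\}$ with birth rates $\lambda_n(\gamma,d)$ and death rates $\mu_n(\gamma,d)$, $n\geq1$, given by $$\mu_n(\gamma,d)=\sum_{i=1}^d i\gamma^{i}\binom{d}{i}\binom{n-1}{i-1},\qquad \lambda_n(\gamma,d)=\sum_{i=1}^d i\gamma^{i}\binom{d}{i}\binom{n-1}{i-1}+\gamma\sum_{i=1}^{d-1}(d-i)\gamma^{i}\binom{d}{i}\binom{n-1}{i-1},$$ and with an arbitrary birth rate $\lambda_0>0$ at state $0$. Then $BD(\gamma,d)$ is null-recurrent for $d\leq2$ and transient for $d\geq3$. *)

(* Defs.v *)
From Stdlib Require Import Reals Lra.
Open Scope R_scope.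

Fixpoint binom (n k : nat) : nat :=
  match n, k with
  | _, O => 1%nat
  | O, S _ => 0%nat
  | S n', S k' => (binom n' k' + binom n' (S k'))%nat
  end.

(* sum_{i=a}^{b} f i  (empty if b < a) *)
Fixpoint rsum_to (f : nat -> R) (b : nat) : R :=
  match b with
  | O => f O
  | S b' => rsum_to f b' + f b
  end.
Definition rsum (a b : nat) (f : nat -> R) : R :=
  rsum_to (fun i => if Nat.leb a i then f i else 0) b.

(* Jump chain: from n go up w.p. lam n/(lam n + mu n), down w.p. mu n/(...). *)
Definition p_up (lam mu : nat -> R) (n : nat) : R := lam n / (lam n + mu n).
Definition p_down (lam mu : nat -> R) (n : nat) : R := mu n / (lam n + mu n).

(* hit_within lam mu N x = P_x(the jump chain hits 0 within N jumps). *)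
Fixpoint hit_within (lam mu : nat -> R) (N x : nat) : R :=
  match N with
  | O => match x with O => 1 | S _ => 0 end
  | S N' =>
      match x with
      | O => 1
      | S x' => p_up lam mu x * hit_within lam mu N' (S x)
              + p_down lam mu x * hit_within lam mu N' x'
      end
  end.

(* Probability, starting at 0, of returning to 0 within N+1 jumps
   (the first jump from 0 goes to 1 since mu 0 = 0). *)
Definition return_within (lam mu : nat -> R) (N : nat) : R :=
  hit_within lam mu N 1.

(* time_within lam mu N x = E_x[ time elapsed before min(T_0, N-th jump) ],
   where holding time at n is exponential of rate lam n + mu n. *)
Fixpoint time_within (lam mu : nat -> R) (N x : nat) : R :=
  match N with
  | O => 0
  | S N' =>
      match x with
      | O => 0
      | S x' => / (lam x + mu x)
              + p_up lam mu x * time_within lam mu N' (S x)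
              + p_down lam mu x * time_within lam mu N' x'
      end
  end.

(* Expected return time to 0 from 0, truncated: holding time at 0 plus
   E_1[time before min(T_0, N-th jump)]. Its supremum over N is E_0[return time]. *)
Definition return_time_within (lam mu : nat -> R) (N : nat) : R :=
  / lam 0%nat + time_within lam mu N 1.

(* The (irreducible) process is recurrent iff state 0 is recurrent,
   i.e. the return probability to 0 equals 1. *)
Definition recurrent (lam mu : nat -> R) : Prop :=
  Un_cv (return_within lam mu) 1.

Definition transient (lam mu : nat -> R) : Prop := ~ recurrent lam mu.

Definition null_recurrent (lam mu : nat -> R) : Prop :=
  recurrent lam mu /\
  (forall M : R, exists N : nat, M < return_time_within lam mu N).

Definition bd_mu (g : R) (d : nat) (n : nat) : R :=
  match n with
  | O => 0
  | S _ => rsum 1 d (fun i =>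
             INR i * g ^ i * INR (binom d i) * INR (binom (n - 1) (i - 1)))
  end.

Definition bd_lam (g : R) (d : nat) (lam0 : R) (n : nat) : R :=
  match n with
  | O => lam0
  | S _ => rsum 1 d (fun i =>
             INR i * g ^ i * INR (binom d i) * INR (binom (n - 1) (i - 1)))
         + g * rsum 1 (d - 1) (fun i =>
             INR (d - i) * g ^ i * INR (binom d i) * INR (binom (n - 1) (i - 1)))
  end.

(* Main.v *)
Require Import Defs.
From Stdlib Require Import Reals Lra Lia.
Open Scope R_scope.

Fixpoint ssum (f : nat -> R) (m : nat) : R :=
  match m with O => 0 | S m' => ssum f m' + f m' end.

Lemma rsum_ssum f m : rsum 1 m f = ssum (fun j => f (S j)) m.
Proof.
  induction m as [|m IH]; [reflexivity|].
  change (rsum 1 (S m) f) with (rsum 1 m f + f (S m)). rewrite IH. reflexivity.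
Qed.

Lemma ssum_ext f h m : (forall j, (j < m)%nat -> f j = h j) -> ssum f m = ssum h m.
Proof. induction m; intros H; simpl; [reflexivity|].
  rewrite IHm by (intros; apply H; lia). rewrite H by lia. reflexivity. Qed.

Lemma ssum_le f h m : (forall j, (j < m)%nat -> f j <= h j) -> ssum f m <= ssum h m.
Proof. induction m; intros H; simpl; [lra|].
  assert (ssum f m <= ssum h m) by (apply IHm; intros; apply H; lia).
  assert (f m <= h m) by (apply H; lia). lra. Qed.

Lemma ssum_nonneg f m : (forall j, (j<m)%nat -> 0 <= f j) -> 0 <= ssum f m.
Proof. induction m; intros H; simpl; [lra|].
  assert (0 <= ssum f m) by (apply IHm; intros; apply H; lia).
  assert (0 <= f m) by (apply H; lia). lra. Qed.

Lemma ssum_plus f h m : ssum (fun j => f j + h j) m = ssum f m + ssum h m.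
Proof. induction m; simpl; [lra|]. rewrite IHm. lra. Qed.

Lemma ssum_scal a f m : ssum (fun j => a * f j) m = a * ssum f m.
Proof. induction m; simpl; [lra|]. rewrite IHm. lra. Qed.

Lemma ssum_shift f m : ssum f (S m) = f O + ssum (fun j => f (S j)) m.
Proof. induction m; simpl in *. lra. rewrite IHm. lra. Qed.

Lemma binom_0 n : binom n 0 = 1%nat. Proof. destruct n; reflexivity. Qed.
Lemma binom_1 n : binom n 1 = n.
Proof. induction n; simpl; [reflexivity|]. rewrite binom_0, IHn. reflexivity. Qed.

Lemma binom_rec n k : (S k * binom n (S k) + k * binom n k = n * binom n k)%nat.
Proof.
  revert k; induction n as [|n IH]; intros k.
  - destruct k; simpl; lia.
  - destruct k as [|k].
    + rewrite binom_1, binom_0. lia.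
    + simpl binom. pose proof (IH k) as H1. pose proof (IH (S k)) as H2. nia.
Qed.

Lemma binom_rec_R n k : INR (binom n (S k)) * (INR k + 1) = (INR n - INR k) * INR (binom n k).
Proof. pose proof (binom_rec n k) as H. apply (f_equal INR) in H.
  rewrite plus_INR, !mult_INR, S_INR in H. lra. Qed.

Definition posr (lam mu : nat -> R) := forall n, (1 <= n)%nat -> 0 < lam n /\ 0 < mu n.

Lemma pq lam mu n : posr lam mu -> (1<=n)%nat ->
  0 <= p_up lam mu n /\ 0 <= p_down lam mu n /\ p_up lam mu n + p_down lam mu n = 1.
Proof. intros H Hn. destruct (H n Hn). unfold p_up, p_down.
  split; [|split].
  - unfold Rdiv; apply Rmult_le_pos; [lra| left; apply Rinv_0_lt_compat; lra].
  - unfold Rdiv; apply Rmult_le_pos; [lra| left; apply Rinv_0_lt_compat; lra].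
  - field; lra.
Qed.

Lemma hit_0 lam mu N : hit_within lam mu N 0 = 1. Proof. destruct N; reflexivity. Qed.
Lemma hit_S lam mu N x : hit_within lam mu (S N) (S x) =
  p_up lam mu (S x) * hit_within lam mu N (S (S x)) + p_down lam mu (S x) * hit_within lam mu N x.
Proof. reflexivity. Qed.
Lemma time_S lam mu N x : time_within lam mu (S N) (S x) =
  / (lam (S x) + mu (S x)) + p_up lam mu (S x) * time_within lam mu N (S (S x))
   + p_down lam mu (S x) * time_within lam mu N x.
Proof. reflexivity. Qed.

Lemma hit_bounds lam mu : posr lam mu -> forall N x, 0 <= hit_within lam mu N x <= 1.
Proof. intros Hp N. induction N; intros [|x].
  - simpl; lra.
  - simpl; lra.
  - rewrite hit_0; lra.
  - rewrite hit_S. destruct (pq lam mu (S x) Hp) as [H1 [H2 H3]]; [lia|].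
    destruct (IHN (S (S x))). destruct (IHN x).
    assert (0 <= p_up lam mu (S x) * hit_within lam mu N (S (S x)) <= p_up lam mu (S x))
      by (split; [apply Rmult_le_pos; lra| rewrite <- (Rmult_1_r (p_up _ _ _)) at 2; apply Rmult_le_compat_l; lra]).
    assert (0 <= p_down lam mu (S x) * hit_within lam mu N x <= p_down lam mu (S x))
      by (split; [apply Rmult_le_pos; lra| rewrite <- (Rmult_1_r (p_down _ _ _)) at 2; apply Rmult_le_compat_l; lra]).
    lra.
Qed.

Lemma hit_mono lam mu : posr lam mu -> forall N x, hit_within lam mu N x <= hit_within lam mu (S N) x.
Proof. intros Hp N. induction N; intros [|x].
  - rewrite !hit_0; lra.
  - simpl hit_within at 1. apply hit_bounds; auto.
  - rewrite !hit_0; lra.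
  - rewrite (hit_S _ _ (S N)), hit_S. destruct (pq lam mu (S x) Hp) as [H1 [H2 H3]]; [lia|].
    apply Rplus_le_compat; apply Rmult_le_compat_l; auto.
Qed.

Lemma hit_le_super lam mu (h : nat -> R) : posr lam mu -> h 0%nat = 1 -> (forall x, 0 <= h x) ->
  (forall x, p_up lam mu (S x) * h (S (S x)) + p_down lam mu (S x) * h x <= h (S x)) ->
  forall N x, hit_within lam mu N x <= h x.
Proof. intros Hp H0 Hn Hs N. induction N; intros [|x].
  - simpl; lra.
  - simpl; apply Hn.
  - rewrite hit_0; lra.
  - rewrite hit_S. destruct (pq lam mu (S x) Hp) as [H1 [H2 H3]]; [lia|].
    eapply Rle_trans; [|apply Hs].
    apply Rplus_le_compat; apply Rmult_le_compat_l; auto.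
Qed.

Lemma transient_of lam mu (h : nat -> R) : posr lam mu -> h 0%nat = 1 -> (forall x, 0 <= h x) ->
  (forall x, p_up lam mu (S x) * h (S (S x)) + p_down lam mu (S x) * h x <= h (S x)) ->
  h 1%nat < 1 -> transient lam mu.
Proof. intros Hp H0 Hn Hs H1 Hrec. unfold recurrent in Hrec.
  destruct (Hrec (1 - h 1%nat)) as [N HN]; [lra|].
  specialize (HN N (le_n N)). unfold R_dist, return_within in HN.
  pose proof (hit_le_super lam mu h Hp H0 Hn Hs N 1) as Hb.
  apply Rabs_def2 in HN. lra.
Qed.

Lemma cv_const c : Un_cv (fun _ => c) c.
Proof. intros eps He. exists 0%nat. intros. unfold R_dist. replace (c - c) with 0 by ring.
  rewrite Rabs_R0; lra. Qed.

Lemma cv_shift u l : Un_cv u l -> Un_cv (fun n => u (S n)) l.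
Proof. intros H eps He; destruct (H eps He) as [N HN]; exists N; intros n Hn; apply HN; lia. Qed.

Lemma recurrent_of lam mu (w : nat -> R) (c : R) : posr lam mu -> 0 < c -> w 0%nat = 1 ->
  (forall k, 0 < w k) -> (forall m, lam (S m) * w (S m) = c) -> (forall m, mu (S m) * w m = c) ->
  (forall B, exists x, B < ssum w x) -> recurrent lam mu.
Proof.
  intros Hp Hc Hw0 Hw Hl Hm Hunb.
  assert (Hv : forall x, {l | Un_cv (fun N => hit_within lam mu N x) l}).
  { intro x. apply growing_cv. intro n. apply hit_mono; auto.
    exists 1. intros y [i ->]. apply hit_bounds; auto. }
  set (v := fun x => proj1_sig (Hv x)).
  assert (Hcv : forall x, Un_cv (fun N => hit_within lam mu N x) (v x)) by (intro x; exact (proj2_sig (Hv x))).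
  assert (v0 : v 0%nat = 1).
  { apply UL_sequence with (fun N => hit_within lam mu N 0); auto.
    intros eps He. exists 0%nat. intros. rewrite hit_0. unfold R_dist. replace (1 - 1) with 0 by ring.
    rewrite Rabs_R0; lra. }
  assert (vnn : forall x, 0 <= v x).
  { intro x. apply Rle_trans with (hit_within lam mu 0 x). apply hit_bounds; auto.
    apply (growing_ineq (fun N => hit_within lam mu N x)); auto. intro n; apply hit_mono; auto. }
  assert (vle : forall x, v x <= 1).
  { intro x. apply (Rle_cv_lim (Un := fun N => hit_within lam mu N x) (Vn := fun _ => 1)); auto.
    intro n; apply hit_bounds; auto. apply cv_const. }
  assert (harm : forall m, v (S m) = p_up lam mu (S m) * v (S (S m)) + p_down lam mu (S m) * v m).
  { intro m. apply UL_sequence with (fun N => hit_within lam mu (S N) (S m)).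
    - apply (cv_shift (fun N => hit_within lam mu N (S m))). apply Hcv.
    - change (fun N => hit_within lam mu (S N) (S m)) with
        (fun N => p_up lam mu (S m) * hit_within lam mu N (S (S m)) + p_down lam mu (S m) * hit_within lam mu N m).
      apply CV_plus; apply CV_mult; auto; apply cv_const. }
  set (A := 1 - v 1%nat).
  assert (diff : forall x, v x - v (S x) = A * w x).
  { induction x as [|x IH].
    - rewrite v0, Hw0. unfold A. ring.
    - destruct (Hp (S x)) as [Hlp Hmp]; [lia|].
      assert (E : lam (S x) * (v (S x) - v (S (S x))) = mu (S x) * (v x - v (S x))).
      { pose proof (harm x) as Hx. unfold p_up, p_down in Hx.
        set (a := v (S x)) in *. set (b := v (S (S x))) in *. set (e := v x) in *.
        assert (a * (lam (S x) + mu (S x)) = lam (S x) * b + mu (S x) * e).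
        { rewrite Hx at 1. field. lra. }
        nra. }
      apply Rmult_eq_reg_l with (lam (S x)); [|lra].
      rewrite E, IH. transitivity (A * (mu (S x) * w x)); [ring|].
      rewrite Hm, <- (Hl x). ring. }
  assert (vsum : forall x, v x = 1 - A * ssum w x).
  { induction x as [|x IH]; simpl. rewrite v0; ring.
    pose proof (diff x). lra. }
  assert (A0 : A = 0).
  { assert (0 <= A) by (unfold A; specialize (vle 1%nat); lra).
    destruct (Rle_lt_or_eq_dec 0 A H) as [Hlt|Heq]; [|auto].
    exfalso. destruct (Hunb (1/A)) as [x Hx].
    pose proof (vnn x) as Hx2. rewrite vsum in Hx2.
    assert (A * (1/A) = 1) by (field; lra).
    assert (A * (1/A) < A * ssum w x) by (apply Rmult_lt_compat_l; auto).
    lra. }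
  assert (v1 : v 1%nat = 1) by (unfold A in A0; lra).
  unfold recurrent, return_within. rewrite <- v1. apply Hcv.
Qed.

Lemma time_lower lam mu (V : nat -> R) C : posr lam mu -> V 0%nat <= 0 -> (forall x, V x <= C) ->
  (forall m, V (S m) <= / (lam (S m) + mu (S m)) + p_up lam mu (S m) * V (S (S m)) + p_down lam mu (S m) * V m) ->
  forall N x, V x - C * (1 - hit_within lam mu N x) <= time_within lam mu N x.
Proof. intros Hp H0 HC Hs N. induction N; intros [|x].
  - simpl. lra.
  - simpl. specialize (HC (S x)). lra.
  - rewrite hit_0. simpl. lra.
  - rewrite hit_S, time_S. destruct (pq lam mu (S x) Hp) as [H1 [H2 H3]]; [lia|].
    pose proof (IHN (S (S x))) as I1. pose proof (IHN x) as I2.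
    specialize (Hs x).
    set (p := p_up lam mu (S x)) in *. set (q := p_down lam mu (S x)) in *.
    assert (A1 : p * (V (S (S x)) - C * (1 - hit_within lam mu N (S (S x)))) <= p * time_within lam mu N (S (S x)))
      by (apply Rmult_le_compat_l; auto).
    assert (A2 : q * (V x - C * (1 - hit_within lam mu N x)) <= q * time_within lam mu N x)
      by (apply Rmult_le_compat_l; auto).
    assert (A3 : C = C * p + C * q) by (rewrite <- Rmult_plus_distr_l, H3; ring).
    nra.
Qed.

Lemma null_of lam mu (w : nat -> R) (c : R) : posr lam mu -> 0 < lam 0%nat -> recurrent lam mu ->
  0 < c -> w 0%nat = 1 ->
  (forall k, 0 < w k <= 1) -> (forall m, lam (S m) * w (S m) = c) -> (forall m, mu (S m) * w m = c) ->
  forall M : R, exists N : nat, M < return_time_within lam mu N.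
Proof.
  intros Hp Hl0 Hrec Hc Hw0 Hw Hl Hm M.
  set (K := Rabs M + 2 + 1 / c).
  assert (HK : 0 < K) by (unfold K; pose proof (Rabs_pos M); assert (0 < 1/c) by (apply Rdiv_lt_0_compat; lra); lra).
  set (V := fun x => ssum (fun k => w k * (K - (INR k + 1) / c)) x).
  destruct (INR_archimed 1 (c * K)) as [N0 HN0]; [lra|]. rewrite Rmult_1_r in HN0.
  set (C := K * INR N0).
  assert (HVm : forall x, V x <= K * INR (Nat.min x N0)).
  { induction x as [|x IH].
    - unfold V; simpl. lra.
    - unfold V in *. simpl ssum. destruct (Hw x) as [Hw1 Hw2].
      assert (0 <= (INR x + 1) / c) by (unfold Rdiv; apply Rmult_le_pos; [pose proof (pos_INR x); lra | left; apply Rinv_0_lt_compat; lra]).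
      destruct (Compare_dec.le_lt_dec (S x) N0).
      + rewrite Nat.min_l by lia. rewrite Nat.min_l in IH by lia. rewrite S_INR.
        assert (w x * (K - (INR x + 1) / c) <= K) by nra. lra.
      + rewrite Nat.min_r by lia. rewrite Nat.min_r in IH by lia.
        assert (INR N0 <= INR x) by (apply le_INR; lia).
        assert (K - (INR x + 1) / c <= 0).
        { assert (c * K < INR x + 1) by lra.
          assert (K < (INR x + 1)/c). { apply Rmult_lt_reg_l with c; auto. field_simplify; lra. }
          lra. }
        assert (w x * (K - (INR x + 1) / c) <= 0) by nra. lra. }
  assert (HVC : forall x, V x <= C).
  { intro x. eapply Rle_trans; [apply HVm|]. unfold C. apply Rmult_le_compat_l; [lra|].
    apply le_INR. lia. }
  assert (HC0 : 0 <= C) by (unfold C; pose proof (pos_INR N0); nra).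
  assert (Hsub : forall m, V (S m) <= / (lam (S m) + mu (S m)) + p_up lam mu (S m) * V (S (S m)) + p_down lam mu (S m) * V m).
  { intro m. destruct (Hp (S m)) as [Hla Hmu]; [lia|].
    unfold V. cbn [ssum]. set (s := ssum _ m).
    assert (E1 : w (S m) = c / lam (S m)) by (rewrite <- (Hl m); field; lra).
    assert (E2 : w m = c / mu (S m)) by (rewrite <- (Hm m); field; lra).
    rewrite E1, E2. apply Req_le. unfold p_up, p_down. rewrite S_INR. field. lra. }
  pose proof (time_lower lam mu V C Hp (Req_le _ _ eq_refl) HVC Hsub) as HT.
  assert (HV1 : V 1%nat = Rabs M + 2).
  { unfold V. simpl. rewrite Hw0. unfold K. field. lra. }
  unfold recurrent, return_within in Hrec.
  destruct (Hrec (/ (C + 1))) as [N HN]. { apply Rinv_0_lt_compat; lra. }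
  specialize (HN N (le_n N)). unfold R_dist in HN. apply Rabs_def2 in HN.
  exists N. unfold return_time_within.
  pose proof (HT N 1%nat) as HT1. rewrite HV1 in HT1.
  pose proof (hit_bounds lam mu Hp N 1) as Hb.
  assert (C * (1 - hit_within lam mu N 1) <= C * / (C + 1)) by (apply Rmult_le_compat_l; lra).
  assert (C * / (C + 1) < 1). { apply Rmult_lt_reg_r with (C + 1); [lra|]. field_simplify; lra. }
  assert (0 < / lam 0%nat) by (apply Rinv_0_lt_compat; auto).
  pose proof (Rle_abs M). lra.
Qed.

Lemma bd_mu_S g e m : bd_mu g (S e) (S m) =
  ssum (fun j => INR (S j) * g ^ (S j) * INR (binom (S e) (S j)) * INR (binom m j)) (S e).
Proof. unfold bd_mu. cbn beta iota. rewrite rsum_ssum. apply ssum_ext. intros j _.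
  replace (S m - 1)%nat with m by lia. replace (S j - 1)%nat with j by lia. reflexivity. Qed.

Lemma bd_lam_S g e lam0 m : bd_lam g (S e) lam0 (S m) = bd_mu g (S e) (S m) +
  g * ssum (fun j => INR (S e - S j) * g ^ (S j) * INR (binom (S e) (S j)) * INR (binom m j)) e.
Proof. unfold bd_lam, bd_mu. cbn beta iota. rewrite !rsum_ssum.
  replace (S e - 1)%nat with e by lia. f_equal. f_equal. apply ssum_ext. intros j _.
  replace (S m - 1)%nat with m by lia. replace (S j - 1)%nat with j by lia. reflexivity. Qed.

Lemma bd_posr g d lam0 : 0 < g -> (1 <= d)%nat -> posr (bd_lam g d lam0) (bd_mu g d).
Proof. intros Hg Hd n Hn. destruct d as [|e]; [lia|]. destruct n as [|m]; [lia|].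
  assert (Hmu : 0 < bd_mu g (S e) (S m)).
  { rewrite bd_mu_S, ssum_shift. rewrite binom_1, binom_0.
    assert (0 <= ssum (fun j => INR (S (S j)) * g ^ S (S j) * INR (binom (S e) (S (S j))) * INR (binom m (S j))) e).
    { apply ssum_nonneg. intros j _. pose proof (pow_lt g (S (S j)) Hg).
      pose proof (pos_INR (S (S j))). pose proof (pos_INR (binom (S e) (S (S j)))).
      pose proof (pos_INR (binom m (S j))).
      apply Rmult_le_pos; [|lra]; apply Rmult_le_pos; [|lra]; apply Rmult_le_pos; lra. }
    assert (0 < INR 1 * g ^ 1 * INR (S e) * INR 1).
    { rewrite (S_INR e). pose proof (pos_INR e). change (INR 1) with 1. rewrite pow_1. nra. }
    lra. }
  split; auto. rewrite bd_lam_S.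
  assert (0 <= ssum (fun j => INR (S e - S j) * g ^ S j * INR (binom (S e) (S j)) * INR (binom m j)) e).
  { apply ssum_nonneg. intros j _. pose proof (pow_lt g (S j) Hg).
    pose proof (pos_INR (S e - S j)). pose proof (pos_INR (binom (S e) (S j))).
    pose proof (pos_INR (binom m j)). apply Rmult_le_pos; [|lra]; apply Rmult_le_pos; [|lra]; apply Rmult_le_pos; lra. }
  nra.
Qed.

Lemma bd1_mu g m : bd_mu g 1 (S m) = g.
Proof. rewrite bd_mu_S. simpl ssum. rewrite binom_0. simpl. ring. Qed.
Lemma bd1_lam g lam0 m : bd_lam g 1 lam0 (S m) = g.
Proof. rewrite bd_lam_S, bd1_mu. simpl. ring. Qed.

Lemma bd2_mu g m : bd_mu g 2 (S m) = 2 * g * (1 + g * INR m).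
Proof. rewrite bd_mu_S. simpl ssum. rewrite binom_0, binom_1. simpl. ring. Qed.
Lemma bd2_lam g lam0 m : bd_lam g 2 lam0 (S m) = 2 * g * (1 + g * (INR m + 1)).
Proof. rewrite bd_lam_S, bd2_mu. simpl. rewrite binom_0. simpl. ring. Qed.

Lemma key_ineq g e m c lam0 : 0 < g -> (2 <= e)%nat -> c = 2/g + 1 ->
  2 * bd_mu g (S e) (S m) <= (bd_lam g (S e) lam0 (S m) - bd_mu g (S e) (S m)) * (INR m + c).
Proof.
  intros Hg He Hc. rewrite bd_lam_S.
  set (b := fun j => g ^ (S j) * INR (binom (S e) (S j)) * INR (binom m j)).
  assert (Hb : forall j, 0 <= b j).
  { intro j. unfold b. pose proof (pow_lt g (S j) Hg). pose proof (pos_INR (binom (S e) (S j))).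
    pose proof (pos_INR (binom m j)). apply Rmult_le_pos; [|lra]; apply Rmult_le_pos; lra. }
  assert (Id : forall j, (INR j + 1) * (INR j + 2) * b (S j) = g * (INR e - INR j) * (INR m - INR j) * b j).
  { intro j. unfold b. pose proof (binom_rec_R (S e) (S j)) as H1. pose proof (binom_rec_R m j) as H2.
    rewrite !S_INR in H1.
    transitivity (g * (g * g ^ j) * (INR (binom (S e) (S (S j))) * (INR j + 1 + 1)) * (INR (binom m (S j)) * (INR j + 1))).
    { cbn [pow]. ring. }
    rewrite H1, H2. cbn [pow]. ring. }
  assert (Emu : bd_mu g (S e) (S m) = ssum (fun j => (INR j + 1) * b j) (S e)).
  { rewrite bd_mu_S. apply ssum_ext. intros j _. unfold b. rewrite S_INR. ring. }
  assert (Es2 : ssum (fun j => INR (S e - S j) * g ^ (S j) * INR (binom (S e) (S j)) * INR (binom m j)) e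
                = ssum (fun j => (INR e - INR j) * b j) e).
  { apply ssum_ext. intros j Hj. replace (S e - S j)%nat with (e - j)%nat by lia.
    rewrite minus_INR by lia. unfold b. ring. }
  rewrite Es2, Emu.
  replace (ssum (fun j => (INR j + 1) * b j) (S e) +
     g * ssum (fun j => (INR e - INR j) * b j) e - ssum (fun j => (INR j + 1) * b j) (S e))
    with (g * ssum (fun j => (INR e - INR j) * b j) e) by ring.
  assert (E1 : g * ssum (fun j => (INR e - INR j) * b j) e * (INR m + c) =
     ssum (fun j => (INR j + 1) * (INR j + 2) * b (S j)) e +
     ssum (fun j => g * (INR e - INR j) * (INR j + c) * b j) e).
  { transitivity (ssum (fun j => (g * (INR m + c)) * ((INR e - INR j) * b j)) e).
    { rewrite ssum_scal. ring. }
    rewrite <- ssum_plus. apply ssum_ext. intros j _. rewrite Id. ring. }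
  assert (E2 : ssum (fun j => (INR j + 1) * (INR j + 2) * b (S j)) e =
               ssum (fun k => INR k * (INR k + 1) * b k) (S e)).
  { rewrite ssum_shift. simpl INR at 1. rewrite Rmult_0_l, Rmult_0_l, Rplus_0_l.
    apply ssum_ext. intros j _. rewrite S_INR. ring. }
  assert (E3 : ssum (fun j => g * (INR e - INR j) * (INR j + c) * b j) e =
               ssum (fun j => g * (INR e - INR j) * (INR j + c) * b j) (S e)).
  { simpl ssum at 2. replace (INR e - INR e) with 0 by ring. ring. }
  rewrite E1, E2, E3, <- ssum_plus, <- ssum_scal.
  apply ssum_le. intros j Hj.
  assert (Hgc : g * c = 2 + g) by (subst c; field; lra).
  assert (HE : 2 <= INR e) by (replace 2 with (INR 2) by (simpl; ring); apply le_INR; lia).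
  pose proof (Hb j) as Hbj.
  destruct j as [|[|j]].
  - simpl INR. assert (g * (INR e - 0) * (0 + c) * b 0%nat = (2 + g) * INR e * b 0%nat)
      by (rewrite <- Hgc; ring).
    assert (0 <= ((2+g)*INR e - 2) * b 0%nat) by (apply Rmult_le_pos; nra). nra.
  - simpl INR. assert (g * (INR e - 1) * (1 + c) * b 1%nat = (2 + 2*g) * (INR e - 1) * b 1%nat)
      by (replace (2 + 2*g) with (g + g*c) by lra; ring).
    assert (0 <= ((2+2*g)*(INR e - 1) - 2) * b 1%nat) by (apply Rmult_le_pos; nra). nra.
  - set (J := INR (S (S j))) in *.
    assert (HJ : 2 <= J) by (unfold J; rewrite !S_INR; pose proof (pos_INR j); lra).
    assert (HJe : J <= INR e) by (unfold J; apply le_INR; lia).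
    assert (0 <= g * (INR e - J) * (J + c) * b (S (S j))).
    { assert (0 < c) by (subst c; assert (0 < 2/g) by (apply Rdiv_lt_0_compat; lra); lra).
      apply Rmult_le_pos; [|lra]; apply Rmult_le_pos; [|lra]; apply Rmult_le_pos; lra. }
    assert (0 <= (J - 2) * (J + 1) * b (S (S j))).
    { apply Rmult_le_pos; [|lra]; apply Rmult_le_pos; lra. }
    nra.
Qed.

Lemma ln_le y : 0 < y -> ln (1 + y) <= y.
Proof. intro Hy. left. rewrite <- (ln_exp y) at 2. apply ln_increasing; [lra|].
  apply exp_ineq1. auto. lra. Qed.

Lemma ssum_one x : ssum (fun _ => 1) x = INR x.
Proof. induction x; simpl ssum; [reflexivity|]. rewrite IHx, S_INR. ring. Qed.

Lemma ssum_harm g x : 0 < g -> ln (1 + g * INR x) / g <= ssum (fun k => / (1 + g * INR k)) x.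
Proof. intro Hg. induction x as [|x IH].
  - simpl. rewrite Rmult_0_r, Rplus_0_r, ln_1. unfold Rdiv. rewrite Rmult_0_l. lra.
  - simpl ssum. rewrite S_INR. pose proof (pos_INR x) as Hx.
    set (A := 1 + g * INR x).
    assert (0 <= g * INR x) by (apply Rmult_le_pos; lra).
    assert (HA : 0 < A) by (unfold A; lra).
    assert (E : 1 + g * (INR x + 1) = A * (1 + g / A)) by (unfold A; field; lra).
    assert (Hgp : 0 < g / A) by (apply Rdiv_lt_0_compat; lra).
    rewrite E, ln_mult by lra.
    pose proof (ln_le (g / A) Hgp) as HL.
    assert (E2 : (ln A + ln (1 + g / A)) / g = ln A / g + ln (1 + g / A) * / g) by (field; lra).
    rewrite E2.
    assert (H0 : ln (1 + g / A) * / g <= (g / A) * / g) by (apply Rmult_le_compat_r; [left; apply Rinv_0_lt_compat; lra | auto]).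
    replace ((g / A) * / g) with (/ A) in H0 by (field; lra).
    unfold A in *. lra.
Qed.

Theorem lemma4p2 (g : R) (d : nat) (lam0 : R) :
  0 < g -> (1 <= d)%nat -> 0 < lam0 ->
  ((d <= 2)%nat -> null_recurrent (bd_lam g d lam0) (bd_mu g d)) /\
  ((3 <= d)%nat -> transient (bd_lam g d lam0) (bd_mu g d)).
Proof.
  intros Hg Hd Hl0. pose proof (bd_posr g d lam0 Hg Hd) as Hp. split.
  - intro Hd2. assert (Hdd : d = 1%nat \/ d = 2%nat) by lia.
    destruct Hdd as [-> | ->].
    + assert (Hl : forall m, bd_lam g 1 lam0 (S m) * (fun _ => 1) (S m) = g)
        by (intro m; rewrite bd1_lam; ring).
      assert (Hm : forall m, bd_mu g 1 (S m) * (fun _ => 1) m = g)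
        by (intro m; rewrite bd1_mu; ring).
      assert (Hrec : recurrent (bd_lam g 1 lam0) (bd_mu g 1)).
      { apply (recurrent_of _ _ (fun _ => 1) g Hp Hg eq_refl); auto.
        - intros; lra.
        - intro B. destruct (INR_archimed 1 B) as [n Hn]; [lra|]. exists n.
          rewrite ssum_one. lra. }
      split; auto.
      apply (null_of _ _ (fun _ => 1) g Hp Hl0 Hrec Hg eq_refl); auto. intros; lra.
    + set (w := fun k => / (1 + g * INR k)).
      assert (Hwp : forall k, 0 < w k <= 1).
      { intro k. unfold w. pose proof (pos_INR k). assert (0 <= g * INR k) by nra. split.
        apply Rinv_0_lt_compat; lra. rewrite <- Rinv_1. apply Rinv_le_contravar; lra. }
      assert (Hw0 : w 0%nat = 1) by (unfold w; simpl; rewrite Rmult_0_r, Rplus_0_r, Rinv_1; reflexivity).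
      assert (Hl : forall m, bd_lam g 2 lam0 (S m) * w (S m) = 2 * g).
      { intro m. rewrite bd2_lam. unfold w. rewrite S_INR. pose proof (pos_INR m).
        field. nra. }
      assert (Hm : forall m, bd_mu g 2 (S m) * w m = 2 * g).
      { intro m. rewrite bd2_mu. unfold w. pose proof (pos_INR m). field. nra. }
      assert (Hg2 : 0 < 2 * g) by lra.
      assert (Hrec : recurrent (bd_lam g 2 lam0) (bd_mu g 2)).
      { apply (recurrent_of _ _ w (2 * g) Hp Hg2 Hw0); auto.
        - intro k; apply Hwp.
        - intro B. destruct (INR_archimed g (exp (g * B))) as [n Hn]; [lra|]. exists n.
          eapply Rlt_le_trans; [|apply ssum_harm; auto].
          assert (g * B < ln (1 + g * INR n)).
          { rewrite <- (ln_exp (g * B)) at 1. apply ln_increasing. apply exp_pos. lra. }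
          apply Rmult_lt_reg_l with g; [lra|]. field_simplify; lra. }
      split; auto.
      apply (null_of _ _ w (2 * g) Hp Hl0 Hrec Hg2 Hw0); auto.
  - intro Hd3. destruct d as [|e]; [lia|].
    set (c := 2 / g + 1).
    assert (Hc : 1 < c) by (unfold c; assert (0 < 2/g) by (apply Rdiv_lt_0_compat; lra); lra).
    apply (transient_of _ _ (fun x => c / (INR x + c)) Hp).
    + simpl. field. lra.
    + intro x. pose proof (pos_INR x). apply Rlt_le, Rdiv_lt_0_compat; lra.
    + intro m. destruct (Hp (S m)) as [Hla Hmu]; [lia|].
      pose proof (key_ineq g e m c lam0 Hg ltac:(lia) eq_refl) as K.
      unfold p_up, p_down. rewrite !S_INR. pose proof (pos_INR m).
      set (l := bd_lam g (S e) lam0 (S m)) in *. set (u := bd_mu g (S e) (S m)) in *.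
      assert (D : c / (INR m + 1 + c) - (l / (l + u) * (c / (INR m + 1 + 1 + c)) + u / (l + u) * (c / (INR m + c)))
        = c * ((l - u) * (INR m + c) - 2 * u) / ((l + u) * (INR m + c) * (INR m + 1 + c) * (INR m + 1 + 1 + c))).
      { field. repeat split; lra. }
      assert (0 <= c * ((l - u) * (INR m + c) - 2 * u) / ((l + u) * (INR m + c) * (INR m + 1 + c) * (INR m + 1 + 1 + c))).
      { unfold Rdiv. apply Rmult_le_pos. apply Rmult_le_pos; lra.
        left. apply Rinv_0_lt_compat. repeat apply Rmult_lt_0_compat; lra. }
      lra.
    + simpl. apply Rmult_lt_reg_r with (1 + c); [lra|]. field_simplify; lra.
Qed.
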